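(* Let \(m\) be a positive integer that is not a perfect square, let \(a,b,c\) be positive integers with \(\gcd(a,b^2-c^2m)=1\), and let \(A,B\in\mathbb Z\). If \(A\geq (a-1)(b-1+cm)\) and \(B\geq (a-1)(b-1+c)\), then there exist \(x,y,z,w\in\mathbb N\) with \(a(x+y\sqrt m)+(b+c\sqrt m)(z+w\sqrt m)=A+B\sqrt m\).
   Context: \(\mathbb N\) denotes the set of non-negative integers. *)

(* Defs.v *)
From Stdlib Require Import Reals ZArith.
Definition is_perfect_square (m : Z) : Prop := exists k : Z, m = (k * k)%Z.

(* Main.v *)
Require Import Defs.
From Stdlib Require Import Reals ZArith Lia Lra.

Theorem theorem1 (m a b c A B : Z) :
  (0 < m)%Z -> ~ is_perfect_square m ->
  (0 < a)%Z -> (0 < b)%Z -> (0 < c)%Z ->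
  Z.gcd a (b * b - c * c * m) = 1%Z ->
  (A >= (a - 1) * (b - 1 + c * m))%Z ->
  (B >= (a - 1) * (b - 1 + c))%Z ->
  exists x y z w : nat,
    (IZR a * (INR x + INR y * sqrt (IZR m))
     + (IZR b + IZR c * sqrt (IZR m)) * (INR z + INR w * sqrt (IZR m))
     = IZR A + IZR B * sqrt (IZR m))%R.
Proof.
  intros Hm _ Ha Hb Hc Hg HA HB.
  destruct (Z.gcd_bezout _ _ _ Hg) as [u [v Huv]].
  set (z0 := (v * (b * A - c * m * B))%Z).
  set (w0 := (v * (b * B - c * A))%Z).
  set (z := (z0 mod a)%Z). set (w := (w0 mod a)%Z).
  set (q1 := (z0 / a)%Z). set (q2 := (w0 / a)%Z).
  assert (Ez : z0 = (a * q1 + z)%Z) by (apply Z.div_mod; lia).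
  assert (Ew : w0 = (a * q2 + w)%Z) by (apply Z.div_mod; lia).
  assert (Bz : (0 <= z < a)%Z) by (apply Z.mod_pos_bound; lia).
  assert (Bw : (0 <= w < a)%Z) by (apply Z.mod_pos_bound; lia).
  set (x := (A * u + b * q1 + c * m * q2)%Z).
  set (y := (B * u + c * q1 + b * q2)%Z).
  assert (EA : (A = a * x + b * z + c * m * w)%Z).
  { assert (z = z0 - a * q1)%Z as -> by lia. assert (w = w0 - a * q2)%Z as -> by lia.
    unfold x, z0, w0. transitivity (A * (u * a + v * (b * b - c * c * m)))%Z.
    - rewrite Huv; ring.
    - ring. }
  assert (EB : (B = a * y + c * z + b * w)%Z).
  { assert (z = z0 - a * q1)%Z as -> by lia. assert (w = w0 - a * q2)%Z as -> by lia.
    unfold y, z0, w0. transitivity (B * (u * a + v * (b * b - c * c * m)))%Z.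
    - rewrite Huv; ring.
    - ring. }
  assert (b * z <= b * (a - 1))%Z by (apply Z.mul_le_mono_nonneg_l; lia).
  assert (c * w <= c * (a - 1))%Z by (apply Z.mul_le_mono_nonneg_l; lia).
  assert (c * m * w <= c * m * (a - 1))%Z by (apply Z.mul_le_mono_nonneg_l; lia).
  assert (b * w <= b * (a - 1))%Z by (apply Z.mul_le_mono_nonneg_l; lia).
  assert (c * z <= c * (a - 1))%Z by (apply Z.mul_le_mono_nonneg_l; lia).
  assert (Hx : (0 <= x)%Z).
  { destruct (Z_lt_le_dec x 0) as [Hn|]; [|lia].
    assert (a * x <= a * (-1))%Z by (apply Z.mul_le_mono_nonneg_l; lia).
    exfalso. assert (HH : (A >= (a - 1) * (b - 1 + c * m))%Z) by exact HA.
    assert ((a - 1) * (b - 1 + c * m) = b * (a - 1) + c * m * (a - 1) - (a - 1))%Z by ring.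
    lia. }
  assert (Hy : (0 <= y)%Z).
  { destruct (Z_lt_le_dec y 0) as [Hn|]; [|lia].
    assert (a * y <= a * (-1))%Z by (apply Z.mul_le_mono_nonneg_l; lia).
    exfalso.
    assert ((a - 1) * (b - 1 + c) = b * (a - 1) + c * (a - 1) - (a - 1))%Z by ring.
    lia. }
  exists (Z.to_nat x), (Z.to_nat y), (Z.to_nat z), (Z.to_nat w).
  rewrite !INR_IZR_INZ, !Z2Nat.id by lia.
  rewrite EA, EB, !plus_IZR, !mult_IZR.
  assert (Hs : (sqrt (IZR m) * sqrt (IZR m) = IZR m)%R).
  { apply sqrt_sqrt. apply IZR_le. lia. }
  set (s := sqrt (IZR m)) in *. clearbody s.
  rewrite <- Hs. ring.
Qed.
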